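(* Let $L\in\mathbf{LMO}(\Sigma)$ be a language recognized by some MON-1qfa with isolated cut-point. Then its syntactic monoid $M(L)$ is an $R$-trivial block group, i.e. $M(L)\in\mathbf{BG}\cap\mathbf{R}$.
   Context: A MON-1qfa over a finite alphabet $\Sigma$ is a tuple $A=\langle\Sigma\cup\{\#\},(O_c)_{c\in\Sigma\cup\{\#\}},\pi_0,F\rangle$, where $\pi_0\in\mathbb{C}^{1\times m}$ has norm $1$, each $O_c$ is an observable (Hermitian $m\times m$ matrix) with spectral decomposition $O_c=\sum_{r\in V(O_c)} r\,P_c(r)$ into orthogonal projectors, and $F\subseteq V(O_\#)$. For $x=x_1\cdots x_n$, with $\rho_0=\pi_0^\dagger\pi_0$ and $\rho_i=\sum_{r}P_{x_i}(r)\rho_{i-1}P_{x_i}(r)$, the acceptance probability is $p_A(x)=\sum_{r\in F}\mathrm{tr}(P_\#(r)\rho_n)$. $A$ recognizes $L$ with isolated cut-point $\lambda$ if for all $x\in\Sigma^*$, $x\in L\Leftrightarrow p_A(x)>\lambda$, and there is $\delta>0$ with $|p_A(x)-\lambda|\ge\delta$ for all $x$. $\mathbf{LMO}(\Sigma)$ is the class of languages over $\Sigma$ recognized by some MON-1qfa with isolated cut-point. $M(L)$ is the syntactic monoid of $L$. $\mathbf{BG}$ is the class of finite block groups: finite monoids in which every $R$-class and every $L$-class contains at most one idempotent. $\mathbf{R}$ is the class of $R$-trivial finite monoids ($xM=yM\Rightarrow x=y$). *)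

(* Defs.v *)
From HB Require Import structures.
From mathcomp Require Import all_boot all_order all_algebra.
From mathcomp Require Import reals complex.
Set Implicit Arguments. Unset Strict Implicit. Unset Printing Implicit Defensive.
Import Order.TTheory GRing.Theory Num.Theory.
Local Open Scope ring_scope.

Definition adj (R : realType) (p q : nat) (M : 'M[R[i]]_(p, q)) : 'M[R[i]]_(q, p) :=
  (map_mx (@conjc R) M)^T.

Definition cr (R : realType) (r : R) : R[i] := Complex r 0.

Definition hermitian (R : realType) (m : nat) (O : 'M[R[i]]_m) : Prop := adj O = O.

Definition orth_projector (R : realType) (m : nat) (P : 'M[R[i]]_m) : Prop :=
  P *m P = P /\ adj P = P.

(* [spectral_decomp O s] : s = [:: (r_1,P_1); ...; (r_k,P_k)] is the spectral
   decomposition  O = sum_r r P(r)  of the observable O: the r's are the pairwise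
   distinct (real) eigenvalues V(O), the P(r) are nonzero, pairwise orthogonal,
   orthogonal projectors summing to the identity. *)
Definition spectral_decomp (R : realType) (m : nat) (O : 'M[R[i]]_m)
    (s : seq (R * 'M[R[i]]_m)) : Prop :=
  [/\ uniq (map fst s),
      (forall rP, rP \in s -> orth_projector rP.2 /\ rP.2 != 0),
      pairwise (fun a b => (a.2 *m b.2 == 0) && (b.2 *m a.2 == 0)) s,
      \sum_(rP <- s) rP.2 = 1%:M
    & O = \sum_(rP <- s) cr rP.1 *: rP.2].

(* The observable O_# of the
   end-marker # is [obs_end]; [spec c] / [spec_end] are their spectral
   decompositions; [acc] is the set F of accepting values. *)
Record mon1qfa (S : finType) (R : realType) (m : nat) := Mon1qfa {
  obs : S -> 'M[R[i]]_m;
  spec : S -> seq (R * 'M[R[i]]_m);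
  obs_end : 'M[R[i]]_m;
  spec_end : seq (R * 'M[R[i]]_m);
  pi0 : 'rV[R[i]]_m;
  acc : seq R
}.

Definition mon1qfa_wf (S : finType) (R : realType) (m : nat) (A : mon1qfa S R m) : Prop :=
  [/\ (forall c, hermitian (obs A c) /\ spectral_decomp (obs A c) (spec A c)),
      hermitian (obs_end A) /\ spectral_decomp (obs_end A) (spec_end A),
      pi0 A *m adj (pi0 A) = 1%:M
    & {subset acc A <= map fst (spec_end A)} ].

Definition measure (R : realType) (m : nat) (s : seq (R * 'M[R[i]]_m))
    (rho : 'M[R[i]]_m) : 'M[R[i]]_m :=
  \sum_(rP <- s) rP.2 *m rho *m rP.2.

Definition qfa_state (S : finType) (R : realType) (m : nat) (A : mon1qfa S R m)
    (x : seq S) : 'M[R[i]]_m :=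
  foldl (fun rho c => measure (spec A c) rho) (adj (pi0 A) *m pi0 A) x.

(* p_A(x) = sum_{r in F} tr(P_#(r) rho_n)  (a real number; we take its real part) *)
Definition accept_prob (S : finType) (R : realType) (m : nat) (A : mon1qfa S R m)
    (x : seq S) : R :=
  complex.Re (\sum_(rP <- spec_end A | rP.1 \in acc A) \tr (rP.2 *m qfa_state A x)).

Definition recognizes_isolated (S : finType) (R : realType) (m : nat)
    (A : mon1qfa S R m) (L : seq S -> Prop) (lambda : R) : Prop :=
  (forall x, L x <-> lambda < accept_prob A x) /\
  (exists delta : R, 0 < delta /\ forall x, delta <= `|accept_prob A x - lambda|).

Definition LMO (S : finType) (L : seq S -> Prop) : Prop :=
  exists (R : realType) (m : nat) (A : mon1qfa S R m) (lambda : R),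
    mon1qfa_wf A /\ recognizes_isolated A L lambda.

(* syntactic congruence; M(L) = S^* / synt L, with [u][v] = [uv], unit [nil] *)
Definition synt (S : finType) (L : seq S -> Prop) (u v : seq S) : Prop :=
  forall x y, L (x ++ u ++ y) <-> L (x ++ v ++ y).

Definition synt_finite (S : finType) (L : seq S -> Prop) : Prop :=
  exists s : seq (seq S), forall u, exists2 v, v \in s & synt L u v.

(* Green's relations in M(L):  [u] M = [v] M,  resp.  M [u] = M [v] *)
Definition synt_Rrel (S : finType) (L : seq S -> Prop) (u v : seq S) : Prop :=
  (exists x, synt L (u ++ x) v) /\ (exists y, synt L (v ++ y) u).
Definition synt_Lrel (S : finType) (L : seq S -> Prop) (u v : seq S) : Prop :=
  (exists x, synt L (x ++ u) v) /\ (exists y, synt L (y ++ v) u).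

Definition synt_idem (S : finType) (L : seq S -> Prop) (e : seq S) : Prop :=
  synt L (e ++ e) e.

(* M(L) in BG: finite, every R-class and every L-class has at most one idempotent *)
Definition synt_monoid_in_BG (S : finType) (L : seq S -> Prop) : Prop :=
  [/\ synt_finite L,
      (forall e f, synt_idem L e -> synt_idem L f -> synt_Rrel L e f -> synt L e f)
    & (forall e f, synt_idem L e -> synt_idem L f -> synt_Lrel L e f -> synt L e f)].

Definition synt_monoid_in_R (S : finType) (L : seq S -> Prop) : Prop :=
  synt_finite L /\ (forall u v, synt_Rrel L u v -> synt L u v).

(* Main.v *)
Require Import Defs.
From HB Require Import structures.
From mathcomp Require Import all_boot all_order all_algebra.
From mathcomp Require Import reals complex.
From mathcomp Require Import ring lra.
From Stdlib Require Import Classical.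
Set Implicit Arguments. Unset Strict Implicit. Unset Printing Implicit Defensive.
Import Order.TTheory GRing.Theory Num.Theory.
Local Open Scope ring_scope.
Notation CRe := complex.Re.
Notation CIm := complex.Im.

Lemma half_lt (R : realType) (d : R) : 0 < d -> d / 2 < 2 * d.
Proof. move=> h; lra. Qed.
Lemma three_half (R : realType) (d x y z : R) :
  0 < d -> x < d / 2 -> y < d / 2 -> z < d / 2 -> x + (y + z) < 2 * d.
Proof. move=> h; lra. Qed.

Section IP.
Variables (R : realType) (m : nat).
Local Notation M := 'M[R[i]]_m.

Lemma ReD (x y : R[i]) : CRe (x + y) = CRe x + CRe y. Proof. by case: x => a b; case: y => c d. Qed.
Lemma ImD (x y : R[i]) : CIm (x + y) = CIm x + CIm y. Proof. by case: x => a b; case: y => c d. Qed.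
Lemma ReN (x : R[i]) : CRe (- x) = - CRe x. Proof. by case: x => a b. Qed.
Lemma ImN (x : R[i]) : CIm (- x) = - CIm x. Proof. by case: x => a b. Qed.
Lemma Re0 : CRe (0 : R[i]) = 0. Proof. by []. Qed.
Lemma ReJM (x y : R[i]) : CRe (conjc x * y) = CRe x * CRe y + CIm x * CIm y.
Proof. case: x => a b; case: y => c d /=. ring. Qed.

Definition ip (A B : M) : R :=
  \sum_i \sum_j (CRe (A i j) * CRe (B i j) + CIm (A i j) * CIm (B i j)).
Definition nrm (A : M) := ip A A.

Lemma ipC A B : ip A B = ip B A.
Proof. apply: eq_bigr => i _; apply: eq_bigr => j _; ring. Qed.

Lemma ipDr A B C : ip A (B + C) = ip A B + ip A C.
Proof.
rewrite /ip -big_split; apply: eq_bigr => i _ /=; rewrite -big_split.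
apply: eq_bigr => j _ /=; rewrite mxE ReD ImD; ring.
Qed.
Lemma ipNr A B : ip A (- B) = - ip A B.
Proof.
rewrite /ip -sumrN; apply: eq_bigr => i _ /=; rewrite -sumrN.
apply: eq_bigr => j _ /=; rewrite mxE ReN ImN; ring.
Qed.
Lemma ipBr A B C : ip A (B - C) = ip A B - ip A C.
Proof. by rewrite ipDr ipNr. Qed.
Lemma ipDl A B C : ip (B + C) A = ip B A + ip C A.
Proof. by rewrite ipC ipDr !(ipC A). Qed.
Lemma ipNl A B : ip (- B) A = - ip B A.
Proof. by rewrite ipC ipNr ipC. Qed.
Lemma ipBl A B C : ip (B - C) A = ip B A - ip C A.
Proof. by rewrite ipDl ipNl. Qed.
Lemma ipMnr A B k : ip A (B *+ k) = ip A B *+ k.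
Proof. elim: k => [|k IH]; last by rewrite !mulrS ipDr IH.
rewrite !mulr0n /ip big1 // => i _; rewrite big1 // => j _; rewrite mxE /=; ring.
Qed.
Lemma ipMnl A B k : ip (B *+ k) A = ip B A *+ k.
Proof. by rewrite ipC ipMnr ipC. Qed.
Lemma ip0r A : ip A 0 = 0.
Proof. by have := ipMnr A A 0; rewrite !mulr0n. Qed.

Lemma nrm_ge0 A : 0 <= nrm A.
Proof. apply: sumr_ge0 => i _; apply: sumr_ge0 => j _; apply: addr_ge0; exact: sqr_ge0. Qed.
Lemma nrmD A B : nrm (A + B) = nrm A + nrm B + 2 * ip A B.
Proof.
rewrite /nrm !ipDl !ipDr (ipC B A).
move: (ip A A) (ip A B) (ip B B) => x y z; ring.
Qed.
Lemma nrmB A B : nrm (A - B) = nrm A + nrm B - 2 * ip A B.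
Proof.
rewrite /nrm !ipBl !ipBr (ipC B A).
move: (ip A A) (ip A B) (ip B B) => x y z; ring.
Qed.
Lemma nrmN A : nrm (- A) = nrm A.
Proof. by rewrite /nrm ipNl ipNr opprK. Qed.
Lemma nrmMn A k : nrm (A *+ k) = nrm A * (k%:R ^+ 2).
Proof.
by rewrite /nrm ipMnl ipMnr -mulrnA -natrX mulr_natr expnS expn1.
Qed.

Lemma ip_bound A B (k : nat) :
  2 * k%:R * `|ip A B| <= nrm A + k%:R ^+ 2 * nrm B.
Proof.
have h1 := nrm_ge0 (A - B *+ k).
have h2 := nrm_ge0 (A + B *+ k).
rewrite nrmB nrmMn ipMnr -mulr_natr in h1.
rewrite nrmD nrmMn ipMnr -mulr_natr in h2.
case: (lerP 0 (ip A B)) => h; [rewrite ger0_norm //|rewrite ltr0_norm //]; lra.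
Qed.

Lemma adjM p q r (A : 'M[R[i]]_(p, q)) (B : 'M[R[i]]_(q, r)) :
  adj (A *m B) = adj B *m adj A.
Proof. by rewrite /adj map_mxM trmx_mul. Qed.
Lemma adjK p q (A : 'M[R[i]]_(p, q)) : adj (adj A) = A.
Proof. by apply/matrixP => i j; rewrite /adj !mxE conjcK. Qed.

Lemma Re_sum (I : Type) (r : seq I) (P : pred I) (F : I -> R[i]) :
  CRe (\sum_(i <- r | P i) F i) = \sum_(i <- r | P i) CRe (F i).
Proof. exact: (big_morph _ ReD Re0). Qed.

Lemma ip_tr (A B : M) : ip A B = CRe (\tr (adj A *m B)).
Proof.
rewrite /mxtrace Re_sum /ip exchange_big; apply: eq_bigr => i _.
rewrite mxE Re_sum; apply: eq_bigr => j _.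
by rewrite /adj !mxE ReJM.
Qed.

Lemma ip_proj (P A B : M) : adj P = P ->
  ip (P *m A *m P) B = ip A (P *m B *m P).
Proof.
move=> hP; rewrite !ip_tr !adjM hP.
by rewrite -!mulmxA mxtrace_mulC !mulmxA.
Qed.

Definition good (s : seq (R * M)) :=
  (forall rP, rP \in s -> orth_projector rP.2) /\
  pairwise (fun a b => (a.2 *m b.2 == 0) && (b.2 *m a.2 == 0)) s.

Lemma measureD s (A B : M) : measure s (A + B) = measure s A + measure s B.
Proof. by rewrite /measure -big_split; apply: eq_bigr => rP _; rewrite mulmxDr mulmxDl. Qed.
Lemma measureN s (A : M) : measure s (- A) = - measure s A.
Proof. by rewrite /measure -sumrN; apply: eq_bigr => rP _; rewrite mulmxN mulNmx. Qed.
Lemma measureB s (A B : M) : measure s (A - B) = measure s A - measure s B.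
Proof. by rewrite measureD measureN. Qed.

Lemma measure_cons a s (A : M) : measure (a :: s) A = a.2 *m A *m a.2 + measure s A.
Proof. by rewrite /measure big_cons. Qed.

Lemma ip_measure s (A B : M) : (forall rP, rP \in s -> orth_projector rP.2) ->
  ip (measure s A) B = ip A (measure s B).
Proof.
elim: s => [|a s IH] hs.
  by rewrite /measure !big_nil ipC !ip0r.
rewrite !measure_cons ipDl ipDr IH; last by move=> rP h; apply: hs; rewrite inE h orbT.
rewrite ip_proj //; by case: (hs a (mem_head _ _)).
Qed.

Lemma measure_orth P s (A : M) :
  (forall Q, Q \in s -> (P *m Q.2 == 0) && (Q.2 *m P == 0)) ->
  P *m measure s A *m P = 0 /\ measure s (P *m A *m P) = 0.
Proof.
move=> h; split.
  rewrite /measure mulmx_sumr mulmx_suml big1_seq // => Q /h /andP[/eqP h1 /eqP h2].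
  by rewrite !mulmxA h1 !mul0mx.
rewrite /measure big1_seq // => Q /h /andP[/eqP h1 /eqP h2].
by rewrite -!mulmxA h1 !mulmx0.
Qed.

Lemma measure_idem s (A : M) : good s -> measure s (measure s A) = measure s A.
Proof.
elim: s A => [|a s IH] A [hs hp].
  by rewrite /measure !big_nil.
move: hp; rewrite /= => /andP[/allP ha hp].
have hs' : good s by split => // rP h; apply: hs; rewrite inE h orbT.
have [hPP hPa] := hs a (mem_head _ _).
have [o1 o2] := measure_orth A ha.
rewrite !measure_cons measureD mulmxDr mulmxDl o1 o2 IH // addr0.
by rewrite add0r -!mulmxA hPP !mulmxA hPP.
Qed.

Lemma pyth s (A : M) : good s -> nrm A = nrm (measure s A) + nrm (A - measure s A).
Proof.
move=> g.
have h : ip (measure s A) (measure s A) = ip A (measure s A).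
  by rewrite ip_measure ?measure_idem //; case: g.
have e : nrm A = nrm ((A - measure s A) + measure s A) by rewrite subrK.
by rewrite e nrmD ipBl h subrr mulr0 addr0 addrC.
Qed.
End IP.

Lemma cover (X : eqType) (T : finType) (f : X -> T) :
  exists s : seq X, forall x, exists2 y, y \in s & f y = f x.
Proof.
suff h : forall ts : seq T, exists s : seq X, forall x, f x \in ts -> exists2 y, y \in s & f y = f x.
  by have [s hs] := h (enum T); exists s => x; apply: hs; rewrite mem_enum.
elim=> [|t ts [s hs]]; first by exists [::].
case: (classic (exists x, f x = t)) => [[x0 hx0]|hn].
  exists (x0 :: s) => x; rewrite inE => /orP[/eqP ->|hx].
    by exists x0; rewrite ?mem_head.
  by have [y hy ey] := hs x hx; exists y; rewrite // inE hy orbT.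
exists s => x; rewrite inE => /orP[/eqP hx|hx]; last exact: hs.
by exfalso; apply: hn; exists x.
Qed.

Section Words.
Variables (S : finType) (R : realType) (m : nat) (A : mon1qfa S R m).
Hypothesis gA : forall c, good (spec A c).
Local Notation M := 'M[R[i]]_m.
Local Notation nrm := (@nrm R m).
Local Notation ip := (@ip R m).

Definition st (rho : M) (w : seq S) := foldl (fun r c => measure (spec A c) r) rho w.

Lemma st_cat rho u v : st rho (u ++ v) = st (st rho u) v.
Proof. exact: foldl_cat. Qed.
Lemma st_cons rho c w : st rho (c :: w) = st (measure (spec A c) rho) w.
Proof. by []. Qed.

Lemma st_B (X Y : M) w : st (X - Y) w = st X w - st Y w.
Proof. by elim: w X Y => [|c w IH] X Y //; rewrite !st_cons measureB IH. Qed.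

Lemma st_contr (D : M) w : nrm (st D w) <= nrm D.
Proof.
elim: w D => [|c w IH] D //; rewrite st_cons.
apply: le_trans (IH _) _; rewrite (pyth D (gA c)) lerDl; exact: nrm_ge0.
Qed.

Lemma st_adj (Q rho : M) w : ip Q (st rho w) = ip (st Q (rev w)) rho.
Proof.
elim: w Q rho => [|c w IH] Q rho //.
rewrite st_cons IH rev_cons -cats1 st_cat /= ip_measure //; by case: (gA c).
Qed.

Lemma st_incr (z : M) x :
  nrm (st z x - z) <= (size x)%:R * (nrm z - nrm (st z x)).
Proof.
elim: x z => [|c x IH] z; first by rewrite /= subrr mul0r /nrm ip0r.
rewrite st_cons /=; set z' := measure (spec A c) z.
have hp := pyth z (gA c); rewrite -/z' in hp.
case: x IH => [|c' x'] IH.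
  rewrite /= -opprB nrmN hp mul1r; lra.
set x := c' :: x' in IH *.
have hk : (0 < (size x)%:R :> R) by rewrite ltr0n.
set K := (size x)%:R in hk IH *.
have e : st z' x - z = (st z' x - z') + (z' - z) by rewrite addrA subrK.
rewrite e.
set a := st z' x - z'; set b := z' - z.
have hb : nrm b = nrm z - nrm z' by rewrite /b -opprB nrmN hp; lra.
have H2 := IH z'; rewrite -/a in H2.
have H1 := ip_bound a b (size x); rewrite -/K in H1.
have H3 : 2 * K * ip a b <= 2 * K * `|ip a b|.
  by apply: ler_wpM2l; [apply: mulr_ge0; lra | exact: ler_norm].
have H2' : (K + 1) * nrm a <= (K + 1) * (K * (nrm z' - nrm (st z' x))).
  by apply: ler_wpM2l => //; lra.
rewrite -(ler_pM2l hk) nrmD.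
rewrite -[(size x).+1%:R]natr1 -/K.
nra.
Qed.

Definition pw (w : seq S) n := flatten (nseq n w).
Lemma pwS w n : pw w n.+1 = w ++ pw w n. Proof. by []. Qed.
Lemma pwSr w n : pw w n.+1 = pw w n ++ w.
Proof. elim: n => [|n IH]; first by rewrite /pw /= cats0. by rewrite pwS IH catA -pwS IH. Qed.

Lemma pump z0 x y (eps : R) : 0 < eps ->
  exists n, nrm (st (st z0 (pw (x ++ y) n)) x - st z0 (pw (x ++ y) n)) <= eps.
Proof.
move=> he.
set z := fun j => st z0 (pw (x ++ y) j).
set X := (size x)%:R : R.
have hX : 0 <= X by rewrite /X ler0n.
have step j : nrm (st (z j) x - z j) <= X * (nrm (z j) - nrm (z j.+1)).
  apply: le_trans (st_incr _ _) _; apply: ler_wpM2l => //.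
  rewrite lerD2l lerN2 /z pwSr st_cat st_cat; exact: st_contr.
have sum n : (forall j, (j < n)%N -> eps < nrm (st (z j) x - z j)) ->
    n%:R * eps <= X * (nrm (z 0%N) - nrm (z n)).
  elim: n => [|n IH] h; first by rewrite mul0r subrr mulr0.
  have h1 := IH (fun j hj => h j (ltnW hj)).
  have h2 := h n (ltnSn n).
  have h3 := step n.
  rewrite -natr1 mulrDl mul1r; nra.
set n := Num.bound (X * nrm (z 0%N) / eps).
have hb : X * nrm (z 0%N) / eps < n%:R.
  apply: archi_boundP; apply: divr_ge0; [apply: mulr_ge0 => //; exact: nrm_ge0| lra].
case hh : (has (fun j => nrm (st (z j) x - z j) <= eps) (iota 0 n)).
  by case/hasP: hh => j _ hj; exists j.
exfalso; move/hasPn: hh => hh.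
have hall : forall j, (j < n)%N -> eps < nrm (st (z j) x - z j).
  by move=> j hj; rewrite ltNge; apply: hh; rewrite mem_iota.
have := sum n hall.
rewrite ltr_pdivrMr // in hb.
have := nrm_ge0 (z n); have := nrm_ge0 (z 0%N).
nra.
Qed.

Lemma rev_pw w n : rev (pw w n) = pw (rev w) n.
Proof. elim: n => [|n IH] //; by rewrite pwS rev_cat IH -pwSr. Qed.
End Words.

Section Lang.
Variables (S : finType) (R : realType) (m : nat) (A : mon1qfa S R m).
Hypothesis gA : forall c, good (spec A c).
Variables (L : seq S -> Prop) (lambda delta : R).
Hypothesis hrec : forall x, L x <-> lambda < accept_prob A x.
Hypothesis hdel : 0 < delta.
Hypothesis hiso : forall x, delta <= `|accept_prob A x - lambda|.
Local Notation M := 'M[R[i]]_m.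
Local Notation nrm := (@nrm R m).
Local Notation ip := (@ip R m).
Local Notation st := (st A).

Definition rho0 : M := adj (pi0 A) *m pi0 A.
Definition Qf : M := adj (\sum_(rP <- spec_end A | rP.1 \in acc A) rP.2).

Lemma pE x : accept_prob A x = ip Qf (st rho0 x).
Proof.
rewrite /accept_prob ip_tr /Qf adjK -linear_sum /= -mulmx_suml //.
Qed.

Lemma same_side u v : `|accept_prob A u - accept_prob A v| < 2 * delta -> (L u <-> L v).
Proof.
move=> h; rewrite !hrec.
have hu := hiso u; have hv := hiso v.
move: h hu hv; set pu := accept_prob A u; set pv := accept_prob A v => h hu hv.
rewrite ltr_norml in h; case/andP: h => h1 h2.
case: (ltrP lambda pu) => c1; case: (ltrP lambda pv) => c2; split => // _; exfalso.
- move: hu hv; rewrite (gtr0_norm (x := pu - lambda)) ?subr_gt0 //.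
  rewrite (ler0_norm (x := pv - lambda)) ?subr_le0 //; lra.
- move: hu hv; rewrite (gtr0_norm (x := pv - lambda)) ?subr_gt0 //.
  rewrite (ler0_norm (x := pu - lambda)) ?subr_le0 //; lra.
Qed.

Lemma small_ip (Q : M) : exists e, 0 < e /\ forall D, nrm D <= e -> `|ip Q D| < delta / 2.
Proof.
set Z := nrm Q.
have hZ : 0 <= Z by exact: nrm_ge0.
set k := Num.bound (4 * Z / delta).
have h4 : 0 <= 4 * Z / delta by apply: divr_ge0; [apply: mulr_ge0 | apply: ltW].
have hk : 4 * Z / delta < k%:R by apply: archi_boundP.
rewrite ltr_pdivrMr // in hk.
have kpos : 0 < k%:R :> R.
  rewrite lt0r ler0n andbT; apply/eqP => k0; rewrite k0 mul0r in hk; lra.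
exists (delta / (2 * k%:R)); split; first by apply: divr_gt0 => //; apply: mulr_gt0.
move=> D hD.
have hb := ip_bound Q D k.
rewrite -/Z in hb.
have e1 : k%:R * (delta / (2 * k%:R)) = delta / 2 :> R by field; lra.
have hD' : k%:R ^+ 2 * nrm D <= k%:R * (delta / 2).
  rewrite expr2 -mulrA; apply: ler_wpM2l; first lra.
  rewrite -e1; apply: ler_wpM2l => //; lra.
rewrite -(ltr_pM2l (x := 2 * k%:R)); last lra.
nra.
Qed.

Lemma synt_refl u : synt L u u. Proof. by []. Qed.
Lemma synt_sym u v : synt L u v -> synt L v u.
Proof. by move=> h x y; split => H; apply/(h x y). Qed.
Lemma synt_trans u v w : synt L u v -> synt L v w -> synt L u w.
Proof.
move=> h1 h2 x y; split => H; first by apply/(h2 x y)/(h1 x y).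
by apply/(h1 x y)/(h2 x y).
Qed.
Lemma synt_catr u v w : synt L u v -> synt L (u ++ w) (v ++ w).
Proof. by move=> h x y; have := h x (w ++ y); rewrite -!catA. Qed.
Lemma synt_catl u v w : synt L u v -> synt L (w ++ u) (w ++ v).
Proof. by move=> h x y; have := h (x ++ w) y; rewrite -!catA. Qed.

Variable e0 : R.
Hypothesis he0 : 0 < e0.
Hypothesis hQ : forall D, nrm D <= e0 -> `|ip Qf D| < delta / 2.
Hypothesis hR : forall D, nrm D <= e0 -> `|ip rho0 D| < delta / 2.

Lemma Rtriv u v : synt_Rrel L u v -> synt L u v.
Proof.
move=> [[x hx] [y hy]].
have h1 : synt L u (u ++ (x ++ y)).
  by apply: synt_trans (synt_sym hy) _; rewrite catA; exact: synt_catr (synt_sym hx).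
have hpw n : synt L u (u ++ pw (x ++ y) n).
  elim: n => [|n IH]; first by rewrite /pw /= cats0.
  apply: synt_trans IH _; rewrite pwS catA; exact: synt_catr h1.
have hv n : synt L v ((u ++ pw (x ++ y) n) ++ x).
  apply: synt_trans (synt_sym hx) _; exact: synt_catr (hpw n).
move=> a b.
have [n hn] := pump gA (st (st rho0 a) u) x y he0.
rewrite (hpw n a b) (hv n a b).
apply: same_side.
rewrite !pE !st_cat -/(pw _ _).
set z := st (st (st rho0 a) u) (pw (x ++ y) n) in hn *.
rewrite -ipBr -st_B; apply: lt_trans (hQ _) _; last exact: half_lt.
by apply: le_trans (st_contr gA _ _) _; rewrite -nrmN opprB.
Qed.

Lemma Ltriv u v : synt_Lrel L u v -> synt L u v.
Proof.
move=> [[x hx] [y hy]].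
have h1 : synt L v ((x ++ y) ++ v).
  apply: synt_trans (synt_sym hx) _; rewrite -catA; exact: synt_catl (synt_sym hy).
have hpw n : synt L v (pw (x ++ y) n ++ v).
  elim: n => [|n IH]; first by [].
  apply: synt_trans h1 _.
  have -> : pw (x ++ y) n.+1 ++ v = (x ++ y) ++ (pw (x ++ y) n ++ v) by rewrite pwS catA.
  exact: synt_catl IH.
have hu n : synt L u (y ++ (pw (x ++ y) n ++ v)).
  apply: synt_trans (synt_sym hy) _; exact: synt_catl (hpw n).
move=> a b.
have [n hn] := pump gA (st (st Qf (rev b)) (rev v)) (rev y) (rev x) he0.
rewrite (hu n a b) (hpw n a b).
apply: same_side.
rewrite !pE !(st_adj gA) !rev_cat rev_pw rev_cat !st_cat.
set z := st (st (st Qf (rev b)) (rev v)) (pw (rev y ++ rev x) n) in hn *.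
rewrite -ipBl -st_B ipC.
apply: lt_trans (hR _) _; last exact: half_lt.
exact: le_trans (st_contr gA _ _) hn.
Qed.

Hypothesis he01 : e0 <= 1.

Lemma entry_le (D : M) i j : CRe (D i j) ^+ 2 + CIm (D i j) ^+ 2 <= nrm D.
Proof.
have hF : forall i j, 0 <= CRe (D i j) * CRe (D i j) + CIm (D i j) * CIm (D i j).
  by move=> i' j'; apply: addr_ge0; exact: sqr_ge0.
rewrite /nrm /ip (bigD1 i) //= (bigD1 j) //= !expr2 -addrA lerDl.
apply: addr_ge0; first by apply: sumr_ge0 => j' _; exact: hF.
by apply: sumr_ge0 => i' _; apply: sumr_ge0 => j' _; exact: hF.
Qed.

Definition G := nrm rho0 + 1.
Lemma G_ge1 : 1 <= G. Proof. rewrite /G lerDr; exact: nrm_ge0. Qed.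

Lemma entry_bound w i j : `|CRe (st rho0 w i j)| <= G /\ `|CIm (st rho0 w i j)| <= G.
Proof.
have h := le_trans (entry_le (st rho0 w) i j) (st_contr gA rho0 w).
have hB := nrm_ge0 rho0.
set a := CRe _ in h *; set b := CIm _ in h *.
have ha := sqr_ge0 a; have hb := sqr_ge0 b.
have h1 := sqr_ge0 (a - 1); have h2 := sqr_ge0 (a + 1).
have h3 := sqr_ge0 (b - 1); have h4 := sqr_ge0 (b + 1).
rewrite !expr2 in h ha hb h1 h2 h3 h4.
rewrite /G !ler_norml; split; apply/andP; split; nra.
Qed.

Definition cm : R := (m * m)%:R.
Definition eta : R := e0 / (2 * cm + 1).
Lemma cm_ge0 : 0 <= cm. Proof. by rewrite /cm ler0n. Qed.
Lemma eta_gt0 : 0 < eta.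
Proof. apply: divr_gt0 => //; have := cm_ge0; lra. Qed.
Lemma eta_small : 2 * eta ^+ 2 * cm <= e0.
Proof.
have hc := cm_ge0.
have e : eta * (2 * cm + 1) = e0 by rewrite /eta mulrAC -mulrA divff ?mulr1 //; lra.
have he : 0 < eta := eta_gt0.
have h1 : eta <= e0 by rewrite -e; nra.
have h2 : 2 * cm * eta <= 1.
  apply: le_trans he01; rewrite -e; nra.
have h3 : eta * (2 * cm * eta) <= eta * 1 by apply: ler_wpM2l => //; exact: ltW.
have -> : 2 * eta ^+ 2 * cm = eta * (2 * cm * eta) by rewrite expr2; ring.
lra.
Qed.

Definition Kb := Num.truncn (2 * G / eta).
Definition keyf (x : R) : 'I_Kb.+1 := inord (Num.truncn ((x + G) / eta)).

Lemma keyf_eq x y : `|x| <= G -> `|y| <= G -> keyf x = keyf y -> `|x - y| < eta.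
Proof.
have he := eta_gt0.
have aux z : `|z| <= G -> (0 <= (z + G) / eta) /\ (Num.truncn ((z + G) / eta) < Kb.+1)%N.
  move=> /[dup] hz; rewrite ler_norml => /andP[h1 h2].
  have h0 : 0 <= (z + G) / eta by apply: divr_ge0; lra.
  split => //; rewrite ltnS /Kb; apply: le_truncn.
  by rewrite ler_pM2r ?invr_gt0 //; lra.
move=> hx hy.
have [hx0 hxk] := aux x hx; have [hy0 hyk] := aux y hy.
move/(congr1 val); rewrite /keyf /= !inordK // => E.
have := truncn_itv hx0; have := truncn_itv hy0.
move=> /andP[b1 b2] /andP[a1 a2]; rewrite -E in b1 b2.
set n := Num.truncn _ in a1 a2 b1 b2.
rewrite ler_pdivlMr // in a1; rewrite ltr_pdivrMr // in a2.
rewrite ler_pdivlMr // in b1; rewrite ltr_pdivrMr // in b2.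
rewrite -natr1 in a2 b2.
rewrite ltr_norml; apply/andP; split; nra.
Qed.

Definition key (D : M) : {ffun 'I_m * 'I_m -> 'I_Kb.+1 * 'I_Kb.+1} :=
  [ffun ij => (keyf (CRe (D ij.1 ij.2)), keyf (CIm (D ij.1 ij.2)))].

Lemma key_close w1 w2 : key (st rho0 w1) = key (st rho0 w2) ->
  nrm (st rho0 w1 - st rho0 w2) <= e0.
Proof.
move=> hk; have hk' := proj2 (ffunP _ _) hk.
apply: le_trans eta_small.
have hterm : forall i j, CRe ((st rho0 w1 - st rho0 w2) i j) * CRe ((st rho0 w1 - st rho0 w2) i j)
   + CIm ((st rho0 w1 - st rho0 w2) i j) * CIm ((st rho0 w1 - st rho0 w2) i j) <= 2 * eta ^+ 2.
  move=> i j.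
  have := hk' (i, j); rewrite !ffunE /= => [[e1 e2]].
  have [r1 i1] := entry_bound w1 i j; have [r2 i2] := entry_bound w2 i j.
  have := keyf_eq r1 r2 e1; have := keyf_eq i1 i2 e2.
  rewrite !mxE ReD ImD ReN ImN !ltr_norml => /andP[c1 c2] /andP[d1 d2].
  have he := eta_gt0; nra.
rewrite /nrm /ip.
apply: le_trans (_ : \sum_(i < m) \sum_(j < m) 2 * eta ^+ 2 <= _).
  by apply: ler_sum => i _; apply: ler_sum => j _; exact: hterm.
by rewrite sumr_const card_ord sumr_const card_ord /cm mulr_natr mulrnA.
Qed.

Lemma close_p w1 w2 b : nrm (st rho0 w1 - st rho0 w2) <= e0 ->
  `|accept_prob A (w1 ++ b) - accept_prob A (w2 ++ b)| < delta / 2.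
Proof.
move=> h; rewrite !pE !st_cat -ipBr -st_B; apply: hQ.
exact: le_trans (st_contr gA _ _) h.
Qed.

Lemma fin : synt_finite L.
Proof.
set K1 := fun w => key (st rho0 w).
have [sa hsa] := cover K1.
set key2 := fun u => [ffun i : 'I_(size sa) => K1 (nth [::] sa i ++ u)].
have [su hsu] := cover key2.
exists su => u; have [v hv e] := hsu u; exists v => // a b.
have [a' ha' ea] := hsa a.
have hi : (index a' sa < size sa)%N by rewrite index_mem.
have := proj2 (ffunP _ _) e (Ordinal hi); rewrite /key2 !ffunE /= nth_index // => ek.
apply: same_side; rewrite !catA.
have t1 : `|accept_prob A ((a ++ u) ++ b) - accept_prob A ((a' ++ u) ++ b)| < delta / 2.
  apply: close_p; rewrite !st_cat -st_B; apply: le_trans (st_contr gA _ _) _.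
  exact: key_close.
have t2 : `|accept_prob A ((a' ++ u) ++ b) - accept_prob A ((a' ++ v) ++ b)| < delta / 2.
  by apply: close_p; apply: key_close.
have t3 : `|accept_prob A ((a' ++ v) ++ b) - accept_prob A ((a ++ v) ++ b)| < delta / 2.
  apply: close_p; rewrite !st_cat -st_B; apply: le_trans (st_contr gA _ _) _.
  exact: key_close.
apply: le_lt_trans (ler_distD (accept_prob A ((a' ++ u) ++ b)) _ _) _.
apply: le_lt_trans (lerD (lexx _) (ler_distD (accept_prob A ((a' ++ v) ++ b)) _ _)) _.
exact: three_half hdel t1 t2 t3.
Qed.
End Lang.

Theorem theorem3 (S : finType) (L : seq S -> Prop) :
  LMO L -> synt_monoid_in_BG L /\ synt_monoid_in_R L.
Proof.
case=> R [m [A [lambda [wf [hrec [delta [hdel hiso]]]]]]].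
have gA : forall c, good (spec A c).
  move=> c; case: wf => hc _ _ _; case: (hc c) => _ [_ h2 h3 _ _].
  by split => // rP h; exact: (h2 rP h).1.
have [eQ [heQ hQ]] := small_ip hdel (Qf A).
have [eR [heR hR]] := small_ip hdel (rho0 A).
set e0 := Num.min eQ (Num.min eR 1).
have he0 : 0 < e0 by rewrite /e0 !lt_min heQ heR ltr01.
have he0Q : e0 <= eQ by rewrite /e0 ge_min lexx.
have he0R : e0 <= eR by rewrite /e0 !ge_min lexx orbT.
have he01 : e0 <= 1 by rewrite /e0 !ge_min lexx !orbT.
have hQ' : forall D, nrm D <= e0 -> `|ip (Qf A) D| < delta / 2.
  by move=> D hD; apply: hQ; exact: le_trans hD he0Q.
have hR' : forall D, nrm D <= e0 -> `|ip (rho0 A) D| < delta / 2.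
  by move=> D hD; apply: hR; exact: le_trans hD he0R.
have hfin := fin gA hrec hdel hiso he0 hQ' he01.
have hRt := Rtriv gA hrec hdel hiso he0 hQ'.
have hLt := Ltriv gA hrec hdel hiso he0 hR'.
split; first split => //.
- by move=> e f _ _; exact: hRt.
- by move=> e f _ _; exact: hLt.
split => //.
Qed.
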